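(* Let $V$ be a vector space of dimension $\mathbf{n}\ge3$ over an algebraically closed field $\mathbf{k}$ of characteristic $p$, with bilinear form $(,)$ and quadratic form $Q$ such that either (i) $Q=0$, $(x,x)=0$ for all $x$, $V^\perp=0$; or (ii) $Q\ne0$, $(x,y)=Q(x+y)-Q(x)-Q(y)$, $Q|_{V^\perp}$ injective. Let $\kappa\in\{0,1\}$ with $\mathbf{n}-\kappa$ even, $n=(\mathbf{n}-\kappa)/2$, and assume that $Q=0$ or $p=2$. Let $p_1\ge\dots\ge p_\sigma\ge1$ be integers with sum $n$ (and $p_{\sigma+1}=1/2$ if $\kappa=1$). Let $g\in Is(V)$ be unipotent, $N=g-1$, and assume that the multiset of sizes of the Jordan blocks of $N$ on $V$ consists of $2p_1,2p_2,\dots,2p_\sigma$ (and $1$ if $\kappa=1$). Let $(w^t_i)_{t\in[1,\sigma+\kappa],i\in\mathbb{Z}}$ be a $(g,p_* )$-adapted collection. Then: (a) for $t\in[1,\sigma]$ and $\pi=p_t$: $(w^t_i,w^t_j)=\mathrm{sg}(j-i)\binom{|j-i|+\pi-1}{|j-i|-\pi}$ if $|j-i|\ge\pi$, and $(w^t_i,w^t_j)=0$ if $|j-i|<\pi$; (b) if $\kappa=1$, $(w^{\sigma+1}_i,w^{\sigma+1}_j)=0$ for all $i,j\in\mathbb{Z}$; (c) $(w^t_i,w^r_j)=0$ for all $t\ne r$ in $[1,\sigma+\kappa]$ and all $i,j\in\mathbb{Z}$.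
   Context: $V^\perp=\{x\in V;(x,V)=0\}$; $Is(V)$ is the group of $g\in GL(V)$ preserving $(,)$ and $Q$. For $i\in\mathbb{Z}-\{0\}$, $\mathrm{sg}(i)\in\{1,-1\}$ is the sign of $i$. A collection $w^t_i\in V$ is $(g,p_* )$-adapted if: (a) $w^t_{i+1}=gw^t_i$; (b) for $t\in[1,\sigma]$, $(w^t_i,w^t_j)=0$ if $|i-j|<p_t$ and $=1$ if $j-i=p_t$; (c) $(w^t_i,w^r_j)=0$ if $0\le i-j+p_r<2p_t$ and $1\le t<r\le\sigma$; (d) if $\kappa=1$, $(w^{\sigma+1}_i,w^{\sigma+1}_i)=2$; (e) if $\kappa=1$, $(w^t_i,w^{\sigma+1}_j)=0$ whenever $0\le i-j<2p_t$, $1\le t\le\sigma$; (f) $Q(w^t_i)=0$ for $t\in[1,\sigma]$ and $Q(w^{\sigma+1}_i)=1$ if $\kappa=1$. *)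

(* Defs.v *)
From HB Require Import structures.
From mathcomp Require Import all_boot all_order all_algebra.
Set Implicit Arguments. Unset Strict Implicit. Unset Printing Implicit Defensive.
Import Order.TTheory GRing.Theory Num.Theory.
Local Open Scope ring_scope.

Section Defs.
Variables (k : fieldType) (nn : nat).
Local Notation V := 'rV[k]_nn.

Definition bilinear_form (B : V -> V -> k) : Prop :=
  (forall (a : k) (x1 x2 y : V), B (a *: x1 + x2) y = a * B x1 y + B x2 y) /\
  (forall (a : k) (x y1 y2 : V), B x (a *: y1 + y2) = a * B x y1 + B x y2).

Definition quadratic_form (Q : V -> k) : Prop :=
  (forall (a : k) (x : V), Q (a *: x) = a ^+ 2 * Q x) /\
  bilinear_form (fun x y => Q (x + y) - Q x - Q y).

Definition in_perp (B : V -> V -> k) (x : V) : Prop := forall y : V, B x y = 0.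

Definition isometry_of (B : V -> V -> k) (Q : V -> k) (g : 'M[k]_nn) : Prop :=
  g \in unitmx /\
  (forall x y : V, B (x *m g) (y *m g) = B x y) /\
  (forall x : V, Q (x *m g) = Q x).

(* The nilpotent endomorphism v |-> v *m N of V is a direct sum of Jordan
   blocks whose sizes are the entries of s: there is a basis
   (v b j)_{b < size s, j < s_b} of V with v b j *m N = v b (j+1) for
   j+1 < s_b and v b (s_b - 1) *m N = 0. *)
Definition jordan_blocks (N : 'M[k]_nn) (s : seq nat) : Prop :=
  exists v : nat -> nat -> V,
    (forall b j, (b < size s)%N -> (j < nth 0%N s b)%N ->
       v b j *m N = if (j.+1 < nth 0%N s b)%N then v b j.+1 else 0) /\
    (forall c : nat -> nat -> k,
       \sum_(b < size s) \sum_(j < nth 0%N s b) c b j *: v b j = 0 ->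
       forall b j, (b < size s)%N -> (j < nth 0%N s b)%N -> c b j = 0) /\
    (forall x : V, exists c : nat -> nat -> k,
       x = \sum_(b < size s) \sum_(j < nth 0%N s b) c b j *: v b j).

Definition sgk (d : int) : k := if (d < 0)%R then -1 else 1.

(* (g, p_* )-adapted collection; g acts on row vectors by v |-> v *m g. *)
Definition adapted (B : V -> V -> k) (Q : V -> k) (g : 'M[k]_nn)
  (sigma kappa : nat) (p : nat -> nat) (w : nat -> int -> V) : Prop :=
  (forall t i, (1 <= t <= sigma + kappa)%N -> w t (i + 1) = w t i *m g) /\
  (forall t i j, (1 <= t <= sigma)%N ->
     ((`|i - j|%N < p t)%N -> B (w t i) (w t j) = 0) /\
     (j - i = (p t)%:Z -> B (w t i) (w t j) = 1)) /\
  (forall t r i j, (1 <= t)%N -> (t < r)%N -> (r <= sigma)%N ->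
     0 <= i - j + (p r)%:Z < (2 * p t)%:Z -> B (w t i) (w r j) = 0) /\
  (kappa = 1%N -> forall i, B (w sigma.+1 i) (w sigma.+1 i) = 2) /\
  (kappa = 1%N -> forall t i j, (1 <= t <= sigma)%N ->
     0 <= i - j < (2 * p t)%:Z -> B (w t i) (w sigma.+1 j) = 0) /\
  (forall t i, (1 <= t <= sigma)%N -> Q (w t i) = 0) /\
  (kappa = 1%N -> forall i, Q (w sigma.+1 i) = 1).

End Defs.

(* Main.v *)
Require Import Defs.
From HB Require Import structures.
From mathcomp Require Import all_boot all_order all_algebra.
From mathcomp Require Import zify ring lra.
Import Order.TTheory GRing.Theory Num.Theory.
Local Open Scope ring_scope.


Definition Dop (T : zmodType) (f : int -> T) : int -> T := fun i => f (i + 1) - f i.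
Arguments Dop {T}.

Lemma iterD_S (T : zmodType) q (f : int -> T) i :
  iter q.+1 (@Dop T) f i = iter q (@Dop T) f (i + 1) - iter q (@Dop T) f i.
Proof. by rewrite iterS. Qed.

Lemma iterD_ext (T : zmodType) q (f h : int -> T) :
  (forall i, f i = h i) -> forall i, iter q (@Dop T) f i = iter q (@Dop T) h i.
Proof. elim: q => [|q IH] E i; first exact: E. by rewrite !iterD_S !IH. Qed.

Lemma iterD_zero (T : zmodType) q (f : int -> T) :
  (forall i, f i = 0) -> forall i, iter q (@Dop T) f i = 0.
Proof. elim: q => [|q IH] E i; first exact: E. by rewrite !iterD_S !IH // subr0. Qed.

Lemma iterD_lin (T T' : zmodType) (l : T -> T') q (f : int -> T) :
  (forall a b, l (a - b) = l a - l b) ->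
  forall i, iter q (@Dop T') (fun j => l (f j)) i = l (iter q (@Dop T) f i).
Proof. move=> hl; elim: q => [|q IH] i //. by rewrite !iterD_S !IH hl. Qed.

Lemma iterD_sub (T : zmodType) q (f h : int -> T) i :
  iter q (@Dop T) (fun j => f j - h j) i = iter q (@Dop T) f i - iter q (@Dop T) h i.
Proof.
elim: q i => [|q IH] i //. by rewrite !iterD_S !IH !opprD !opprK addrACA.
Qed.

Lemma int_ind2 (P : int -> Prop) a : P a -> (forall i, P i <-> P (i + 1)) -> forall i, P i.
Proof.
move=> Pa H.
have H1 : forall n : nat, P (a + n%:Z) /\ P (a - n%:Z).
  elim=> [|n [IH1 IH2]]; first by split; [have -> : a + 0%:Z = a by lia | have -> : a - 0%:Z = a by lia].
  split.
    have -> : a + n.+1%:Z = (a + n%:Z) + 1 by lia.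
    exact: (H _).1 IH1.
  apply: (H _).2. by have -> : a - n.+1%:Z + 1 = a - n%:Z by lia.
move=> i. case: (lerP a i) => hi.
  have -> : i = a + (`|i - a|%N)%:Z by lia. exact: (H1 _).1.
have -> : i = a - (`|i - a|%N)%:Z by lia. exact: (H1 _).2.
Qed.

Lemma iterD_uniq (K : fieldType) q (f : int -> K) a :
  (forall i, iter q (@Dop K) f i = 0) -> (forall c, (c < q)%N -> f (a + c%:Z) = 0) ->
  forall i, f i = 0.
Proof.
elim: q f a => [|q IH] f a hD hz i; first exact: hD.
have hDf : forall j, Dop f j = 0.
  apply: (IH (Dop f) a) => [j|c hc]; first by rewrite -iterSr.
  rewrite /Dop. have -> : a + c%:Z + 1 = a + (c.+1)%:Z by lia.
  by rewrite !hz ?subr0 // ltnS ltnW.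
have hc : forall j, f j = f a.
  apply: (@int_ind2 (fun j => f j = f a) a) => // j.
  have := hDf j; rewrite /Dop => /eqP; rewrite subr_eq0 => /eqP ->; done.
by rewrite hc -(addr0 a) (hz 0%N).
Qed.
Definition Gb (K : fieldType) (x : int) (r : nat) : K :=
  match x with Posz n => ('C(n, r))%:R | Negz n => (-1) ^+ r * ('C(n + r, r))%:R end.

Lemma Gb0 (K : fieldType) x : Gb K x 0 = 1.
Proof. by case: x => n /=; rewrite bin0 ?mul1r. Qed.

Lemma GbS (K : fieldType) x r : Gb K (x + 1) r.+1 = Gb K x r.+1 + Gb K x r.
Proof.
case: x => [n|n]; last case: n => [|n].
- have -> : Posz n + 1 = Posz n.+1 by lia.
  by rewrite /= binS natrD.
- have -> : Negz 0 + 1 = Posz 0 by lia.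
  by rewrite /= add0n !binn exprS mulN1r !mulr1 addNr.
- have -> : Negz n.+1 + 1 = Negz n by lia.
  rewrite /= (addSn n r.+1) binS (addSnnS n r) natrD exprS. ring.
Qed.

Lemma iterDG (K : fieldType) m c R i :
  iter m (@Dop K) (fun j => Gb K (j + c) R) i = if (m <= R)%N then Gb K (i + c) (R - m) else 0.
Proof.
elim: m i => [|m IH] i; first by rewrite subn0.
rewrite iterD_S !IH. case: (ltnP m R) => h.
  rewrite (ltnW h). have -> : (R - m = (R - m.+1).+1)%N by lia.
  have -> : i + 1 + c = (i + c) + 1 by lia.
  by rewrite GbS addrAC subrr add0r.
case: (leqP m R) => h2; last first.
  by rewrite subr0.
have -> : (R - m = 0)%N by lia.
by rewrite !Gb0 subrr.
Qed.
Set Implicit Arguments.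
Unset Strict Implicit.
Section LA.
Variables (k : fieldType) (nn : nat) (B : 'rV[k]_nn -> 'rV[k]_nn -> k).
Hypothesis hB : bilinear_form B.
Local Notation V := 'rV[k]_nn.

Lemma B1D x1 x2 y : B (x1 + x2) y = B x1 y + B x2 y.
Proof. by have := hB.1 1 x1 x2 y; rewrite scale1r mul1r. Qed.
Lemma B2D x y1 y2 : B x (y1 + y2) = B x y1 + B x y2.
Proof. by have := hB.2 1 x y1 y2; rewrite scale1r mul1r. Qed.
Lemma B10 y : B 0 y = 0.
Proof. by apply/eqP; rewrite -(addrI (B 0 y) (_ : B 0 y + B 0 y = B 0 y + 0)) // addr0 -B1D addr0. Qed.
Lemma B20 x : B x 0 = 0.
Proof. by apply/eqP; rewrite -(addrI (B x 0) (_ : B x 0 + B x 0 = B x 0 + 0)) // addr0 -B2D addr0. Qed.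
Lemma B1Z a x y : B (a *: x) y = a * B x y.
Proof. by have := hB.1 a x 0 y; rewrite addr0 B10 addr0. Qed.
Lemma B2Z a x y : B x (a *: y) = a * B x y.
Proof. by have := hB.2 a x y 0; rewrite addr0 B20 addr0. Qed.
Lemma B1B x1 x2 y : B (x1 - x2) y = B x1 y - B x2 y.
Proof. by rewrite B1D -scaleN1r B1Z mulN1r. Qed.
Lemma B2B x y1 y2 : B x (y1 - y2) = B x y1 - B x y2.
Proof. by rewrite B2D -scaleN1r B2Z mulN1r. Qed.
Lemma B2sum x n (F : 'I_n -> V) : B x (\sum_(i < n) F i) = \sum_(i < n) B x (F i).
Proof. exact: (big_morph (B x) (B2D x) (B20 x)). Qed.

Definition tri (X Y : seq V) :=
  size X = size Y /\
  (forall i j, (i < j < size X)%N -> B (nth 0 Y j) (nth 0 X i) = 0) /\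
  (forall i, (i < size X)%N -> B (nth 0 Y i) (nth 0 X i) != 0).

Lemma tri_zero X Y : tri X Y -> forall kf : 'I_(size X) -> k,
  (forall j, (j < size X)%N -> B (nth 0 Y j) (\sum_(i < size X) kf i *: nth 0 X i) = 0) ->
  forall i, kf i = 0.
Proof.
move=> [hs [hlow hdiag]] kf hB0.
suff H : forall n (i : 'I_(size X)), (size X - n <= i)%N -> kf i = 0.
  by move=> i; apply: (H (size X)); rewrite subnn.
elim=> [|n IH] i hi.
  have := ltn_ord i; lia.
case: (leqP (size X - n) i) => hin; first exact: IH.
have := hB0 i (ltn_ord i). rewrite B2sum (bigD1 i) //= big1.
  rewrite addr0 B2Z => /eqP; rewrite mulf_eq0 (negbTE (hdiag i (ltn_ord i))) orbF.
  by move/eqP.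
move=> i' hi'. have hne : (nat_of_ord i' != nat_of_ord i) := hi'.
rewrite B2Z. case: (ltnP i' i) => h.
  by rewrite hlow ?mulr0 // h ltn_ord.
by rewrite IH ?mul0r //; lia.
Qed.

Lemma tri_free X Y : tri X Y -> free X.
Proof.
move=> ht; apply/(@freeP _ _ _ (in_tuple X)) => kf hsum i; apply: (@tri_zero X Y ht kf) => j _.
by rewrite [X in B _ X]hsum B20.
Qed.

Lemma tri_free_cons X Y x : tri X Y -> x != 0 ->
  (forall j, (j < size X)%N -> B (nth 0 Y j) x = 0) -> free (x :: X).
Proof.
move=> ht hx hO; rewrite free_cons (tri_free ht) andbT.
apply/negP => hspan.
have hsp : x \in span (in_tuple X) by [].
have E := coord_span hsp.
have Z := @tri_zero X Y ht (fun i : 'I_(size X) => coord (in_tuple X) i x).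
move: hx; rewrite E big1 ?eqxx // => i _.
by rewrite Z ?scale0r // => j hj; rewrite -E hO.
Qed.

Lemma tri_cat X1 Y1 X2 Y2 : tri X1 Y1 -> tri X2 Y2 ->
  (forall y x, y \in Y2 -> x \in X1 -> B y x = 0) -> tri (X1 ++ X2) (Y1 ++ Y2).
Proof.
move=> [hs1 [hl1 hd1]] [hs2 [hl2 hd2]] hc.
split; first by rewrite !size_cat hs1 hs2.
split.
  move=> i j /andP[hij]; rewrite size_cat => hj.
  rewrite !nth_cat -hs1.
  case: (ltnP j (size X1)) => hj1.
    by rewrite (ltn_trans hij hj1) hl1 // hij hj1.
  case: (ltnP i (size X1)) => hi1.
    by apply: hc; apply: mem_nth; rewrite -?hs2 //; move: hj hj1; clear; lia.
  apply: hl2; move: hij hj hj1 hi1; clear => a b c d; set s1 := size X1 in a b c d *; lia.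
move=> i; rewrite size_cat => hi; rewrite !nth_cat -hs1.
case: (ltnP i (size X1)) => hi1; first exact: hd1.
apply: hd2; move: hi hi1; clear; lia.
Qed.

Lemma tri_flat (L : seq nat) (Xf Yf : nat -> seq V) :
  (forall s, s \in L -> tri (Xf s) (Yf s)) ->
  (forall s s' y x, s \in L -> s' \in L -> s != s' -> y \in Yf s' -> x \in Xf s -> B y x = 0) ->
  uniq L -> tri (flatten (map Xf L)) (flatten (map Yf L)).
Proof.
elim: L => [|s L IH] ht hc hu; first by split=> //; split=> [i j /andP[_ //]|i //].
move: hu => /= /andP[hsL hu].
apply: tri_cat.
- by apply: ht; rewrite inE eqxx.
- apply: IH => //.
    by move=> s' hs'; apply: ht; rewrite inE hs' orbT.
  move=> s1 s2 y x h1 h2 hne hy hx; apply: (hc s1 s2) => //; by rewrite inE ?h1 ?h2 orbT.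
- move=> y x /flatten_mapP [s' hs' hy] hx.
  apply: (hc s s' y x) => //; rewrite ?inE ?eqxx ?hs' ?orbT //.
  by apply/negP => /eqP E; move: hsL; rewrite E hs'.
Qed.

End LA.

Lemma Gb_formula (k : fieldType) (p : nat) (d : int) : (1 <= p)%N ->
  Gb k (d + ((p%:Z) - 1)) (2 * p - 1) =
  if (p <= `|d|%N)%N then sgk k d * ('C(`|d|%N + p - 1, `|d|%N - p))%:R else 0.
Proof.
move=> hp.
case: d => n.
  have -> : Posz n + (p%:Z - 1) = Posz (n + p - 1)%N by lia.
  have -> : sgk k (Posz n) = 1 by rewrite /sgk.
  rewrite /= mul1r.
  case: (leqP p n) => h.
    have -> : (n - p = n + p - 1 - (2 * p - 1))%N by lia.
    by rewrite bin_sub //; lia.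
  by rewrite bin_small //; lia.
have -> : sgk k (Negz n) = -1 by rewrite /sgk.
rewrite /=.
case: (leqP p n.+1) => h.
  have -> : Negz n + (p%:Z - 1) = Negz (n.+1 - p)%N by lia.
  rewrite /=.
  have -> : (n.+1 - p + (2 * p - 1) = n.+1 + p - 1)%N by lia.
  have -> : (n.+1 - p = n.+1 + p - 1 - (2 * p - 1))%N by lia.
  rewrite bin_sub; last by lia.
  rewrite -signr_odd.
  have -> : odd (2 * p - 1) = true by rewrite oddB ?odd_mul //=; lia.
  by rewrite expr1.
have -> : Negz n + (p%:Z - 1) = Posz (p - n.+2)%N by lia.
by rewrite /= bin_small //; lia.
Qed.

Unset Implicit Arguments.
Set Strict Implicit.


Section Main.
Variables (k : fieldType) (nn : nat) (B : 'rV[k]_nn -> 'rV[k]_nn -> k)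
  (Q : 'rV[k]_nn -> k) (kappa sigma : nat) (p : nat -> nat) (g : 'M[k]_nn)
  (w : nat -> int -> 'rV[k]_nn).
Local Notation V := 'rV[k]_nn.
Hypothesis hB : bilinear_form B.
Hypothesis halt : forall x, B x x = 0.
Hypothesis hk : (kappa <= 1)%N.
Hypothesis hmono : forall t, (1 <= t)%N -> (t < sigma)%N -> (p t.+1 <= p t)%N.
Hypothesis hp1 : forall t, (1 <= t <= sigma)%N -> (1 <= p t)%N.
Hypothesis hgu : g \in unitmx.
Let sz := [seq (2 * p t)%N | t <- iota 1 sigma] ++ nseq kappa 1%N.
Hypothesis hjord : jordan_blocks (g - 1%:M) sz.
Hypothesis had : adapted B Q g sigma kappa p w.
Let N := g - 1%:M.

Lemma skew x y : B x y = - B y x.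
Proof.
have := halt (x + y); rewrite (B1D hB) !(B2D hB) !halt add0r addr0 => /eqP.
by rewrite addr_eq0 => /eqP.
Qed.

Lemma wS t i : (1 <= t <= sigma + kappa)%N -> w t (i + 1) = w t i *m g.
Proof. by move=> ht; apply: had.1. Qed.

Lemma Dw t q i : (1 <= t <= sigma + kappa)%N -> iter q Dop (w t) i = w t i *m N ^+ q.
Proof.
move=> ht; elim: q i => [|q IH] i; first by rewrite expr0 mulmx1.
rewrite iterD_S !IH wS // -mulmxBl -{2}(mulmx1 (w t i)) -mulmxBr -mulmxA.
by rewrite mulmxE -exprS.
Qed.

Lemma commgN q : g * N ^+ q = N ^+ q * g.
Proof. apply: commrX; apply: commrB; [exact: commr_refl | exact: commr1]. Qed.

Lemma wN0 t q : (1 <= t <= sigma + kappa)%N -> w t 0 *m N ^+ q = 0 ->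
  forall i, w t i *m N ^+ q = 0.
Proof.
move=> ht h0; apply: (@int_ind2 (fun i => w t i *m N ^+ q = 0) 0) => // i.
rewrite wS // -mulmxA mulmxE commgN -mulmxE mulmxA.
split=> [->|h]; first by rewrite mul0mx.
by rewrite -(mulmxK hgu (w t i *m N ^+ q)) h mul0mx.
Qed.

Lemma Biter2 x q f i : B x (iter q Dop f i) = iter q Dop (fun j => B x (f j)) i.
Proof. by rewrite (@iterD_lin _ _ (B x) q f) // => a b; rewrite (B2B hB). Qed.

Lemma Biter1 y q f i : B (iter q Dop f i) y = iter q Dop (fun j => B (f j) y) i.
Proof. by rewrite (@iterD_lin _ _ (B^~ y) q f) // => a b; rewrite (B1B hB). Qed.

Definition mm t := if (t <= sigma)%N then (2 * p t)%N else 1%N.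
Definition PP t := w t 0 *m N ^+ (mm t) = 0.

Lemma gram s : (1 <= s <= sigma)%N -> PP s -> forall i j,
  B (w s i) (w s j) = Gb k (j + ((p s)%:Z - 1 - i)) (2 * p s - 1).
Proof.
move=> hs Ps i j.
have hs' : (1 <= s <= sigma + kappa)%N by lia.
have hps := hp1 s hs.
have hmm : mm s = (2 * p s)%N by rewrite /mm; case/andP: hs => _ ->.
set f := fun j => B (w s i) (w s j) - Gb k (j + ((p s)%:Z - 1 - i)) (2 * p s - 1).
suff: f j = 0 by move/eqP; rewrite subr_eq0 => /eqP.
apply: (@iterD_uniq k (2 * p s) f (i - (p s)%:Z + 1)) => [j'|c hc].
  rewrite /f iterD_sub -Biter2 iterDG.
  have -> : (2 * p s <= 2 * p s - 1)%N = false by lia.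
  by rewrite Dw // -hmm (@wN0 s _ hs' Ps) (B20 hB) subr0.
rewrite /f.
have -> : i - (p s)%:Z + 1 + c%:Z + ((p s)%:Z - 1 - i) = Posz c by lia.
have [hb1 hb2] := (had.2.1 s i (i - (p s)%:Z + 1 + c%:Z) hs).
case: (ltnP c (2 * p s - 1)) => hc2.
  rewrite hb1; last by lia.
  by rewrite /= bin_small // subrr.
have hc3 : c = (2 * p s - 1)%N by lia.
rewrite hb2; last by lia.
by rewrite /= hc3 binn subrr.
Qed.

Lemma orth s r : (1 <= s)%N -> (s < r)%N -> (r <= sigma + kappa)%N -> PP s ->
  forall i j, B (w s i) (w r j) = 0.
Proof.
move=> h1 hsr hr Ps i j.
have hs : (1 <= s <= sigma)%N by lia.
have hs' : (1 <= s <= sigma + kappa)%N by lia.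
have hmm : mm s = (2 * p s)%N by rewrite /mm; case/andP: hs => _ ->.
case: (leqP r sigma) => hrs.
  apply: (@iterD_uniq k (2 * p s) (fun i => B (w s i) (w r j)) (j - (p r)%:Z)) => [i'|c hc].
    rewrite -Biter1 Dw // -hmm (@wN0 s _ hs' Ps). by rewrite (B10 hB).
  apply: (had.2.2.1 s r) => //; lia.
have hk1 : kappa = 1%N by lia.
have hr1 : r = sigma.+1 by lia.
rewrite hr1.
apply: (@iterD_uniq k (2 * p s) (fun i => B (w s i) (w sigma.+1 j)) j) => [i'|c hc].
  rewrite -Biter1 Dw // -hmm (@wN0 s _ hs' Ps). by rewrite (B10 hB).
apply: (had.2.2.2.2.1 hk1) => //; lia.
Qed.


Lemma pmono t s : (1 <= t)%N -> (t <= s)%N -> (s <= sigma)%N -> (p s <= p t)%N.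
Proof.
move=> h1; elim: s => [|s IH] hts hs; first by lia.
case: (eqVneq t s.+1) => [<- //|hne].
have h2 : (t <= s)%N by lia.
apply: leq_trans (hmono s _ _) (IH h2 _); lia.
Qed.

Lemma vN (v : nat -> nat -> V)
  (hv1 : forall b j, (b < size sz)%N -> (j < nth 0%N sz b)%N ->
       v b j *m N = if (j.+1 < nth 0%N sz b)%N then v b j.+1 else 0)
  b j a : (b < size sz)%N -> (j < nth 0%N sz b)%N ->
  v b j *m N ^+ a = if (j + a < nth 0%N sz b)%N then v b (j + a)%N else 0.
Proof.
move=> hb hj; elim: a => [|a IH]; first by rewrite expr0 mulmx1 addn0 hj.
rewrite exprSr -mulmxE mulmxA IH.
case: (ltnP (j + a) (nth 0%N sz b)) => h.
  by rewrite hv1 // addnS.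
have -> : (j + a.+1 < nth 0%N sz b)%N = false by lia.
by rewrite mul0mx.
Qed.

Definition Imv (v : nat -> nat -> V) m :=
  (\sum_(b < size sz) <<[seq v (nat_of_ord b) j | j <- iota m (nth 0%N sz b - m)%N]>>)%VS.

Lemma imN (v : nat -> nat -> V)
  (hv1 : forall b j, (b < size sz)%N -> (j < nth 0%N sz b)%N ->
       v b j *m N = if (j.+1 < nth 0%N sz b)%N then v b j.+1 else 0)
  (hv3 : forall x : V, exists c : nat -> nat -> k,
       x = \sum_(b < size sz) \sum_(j < nth 0%N sz b) c b j *: v b j)
  m u : u *m N ^+ m \in Imv v m.
Proof.
have [c ->] := hv3 u.
rewrite mulmx_suml; apply: memv_suml => b _.
rewrite mulmx_suml; apply: memv_suml => j _.
rewrite -scalemxAl; apply: memvZ.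
rewrite (vN v hv1) //; case: ifP => h; last exact: mem0v.
apply: (subvP (sumv_sup b _ (subvv _))) => //.
apply: memv_span; apply: map_f; rewrite mem_iota; lia.
Qed.

Lemma dimIm v m : (\dim (Imv v m) <= \sum_(b < size sz) (nth 0%N sz b - m))%N.
Proof.
apply: leq_trans (dimv_leq_sum _ _ _) _.
apply: leq_sum => b _; apply: leq_trans (dim_span _) _.
by rewrite size_map size_iota.
Qed.

Lemma count_le t : (1 <= t <= sigma + kappa)%N ->
  (\sum_(b < size sz) (nth 0%N sz b - mm t) <= \sum_(s <- iota 1 t.-1) (2 * p s - mm t))%N.
Proof.
move=> ht.
have hm1 : (1 <= mm t)%N.
  rewrite /mm; case: ifP => // h; have := hp1 t; lia.
rewrite -(big_mkord xpredT (fun b => nth 0%N sz b - mm t)%N) -(big_nth 0%N xpredT (fun x => x - mm t)%N).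
rewrite big_cat /= big_map.
have -> : (\sum_(x <- nseq kappa 1%N) (x - mm t) = 0)%N.
  by rewrite big1_seq // => x /andP[_]; rewrite mem_nseq => /andP[_ /eqP ->]; lia.
rewrite addn0.
case: (leqP t sigma) => hts.
  have -> : sigma = (t.-1 + (sigma - t.-1))%N by lia.
  rewrite iotaD big_cat /= [X in (_ + X <= _)%N]big1_seq ?addn0 //.
  move=> s /andP[_]; rewrite mem_iota => hs.
  rewrite /mm hts.
  have := @pmono t s; lia.
have -> : t.-1 = sigma by lia.
by [].
Qed.

Lemma hcross y s b m : (1 <= s <= sigma + kappa)%N -> (forall c, B y (w s c) = 0) ->
  B y (w s b *m N ^+ m) = 0.
Proof. by move=> hs h; rewrite -Dw // Biter2 iterD_zero. Qed.

Lemma hblock s a b m : (1 <= s <= sigma)%N -> PP s -> (m <= 2 * p s - 1)%N ->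
  B (w s a) (w s b *m N ^+ m) = Gb k (b + ((p s)%:Z - 1 - a)) (2 * p s - 1 - m).
Proof.
move=> hs Ps hm.
have hs' : (1 <= s <= sigma + kappa)%N by lia.
rewrite -Dw // Biter2.
rewrite (@iterD_ext _ m _ (fun j => Gb k (j + ((p s)%:Z - 1 - a)) (2 * p s - 1))).
  by rewrite iterDG hm.
by move=> j; rewrite gram.
Qed.

Lemma PP_all t : (1 <= t <= sigma + kappa)%N -> PP t.
Proof.
case: hjord => v [hv1 [_ hv3]].
elim/ltn_ind: t => t IH ht.
have IH' : forall s, (1 <= s)%N -> (s < t)%N -> PP s.
  by move=> s h1 h2; apply: IH => //; lia.
rewrite /PP; set m := mm t.
have hm1 : (1 <= m)%N.
  rewrite /m /mm; case: ifP => // h; have := hp1 t; lia.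
case: (eqVneq (w t 0 *m N ^+ m) 0) => // hx; exfalso.
pose Xf s := [seq w s (Posz i) *m N ^+ m | i <- iota 0 (2 * p s - m)].
pose Yf s := [seq w s (Posz i + m%:Z - (p s)%:Z) | i <- iota 0 (2 * p s - m)].
pose L := iota 1 t.-1.
have hL : forall s, s \in L -> [/\ (1 <= s)%N, (s < t)%N & (s <= sigma)%N].
  by move=> s; rewrite mem_iota => hs; split; lia.
have hsr : forall s, s \in L -> (1 <= s <= sigma + kappa)%N.
  by move=> s /hL [] *; lia.
have hOO : forall s s' a b, s \in L -> s' \in L -> s != s' -> B (w s' a) (w s b) = 0.
  move=> s s' a b hs hs' hne.
  have [h1 h2 h3] := hL s hs; have [h1' h2' h3'] := hL s' hs'.
  case: (ltngtP s s') => hlt.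
  - by rewrite skew (@orth _ _ h1 hlt _ (IH' s h1 h2)) ?oppr0 //; lia.
  - by rewrite (@orth _ _ h1' hlt _ (IH' s' h1' h2')) //; lia.
  - by move: hne; rewrite hlt eqxx.
have htri : tri B (flatten (map Xf L)) (flatten (map Yf L)).
  apply: tri_flat; last exact: iota_uniq.
    move=> s hs; have [h1 h2 h3] := hL s hs.
    have hs1 : (1 <= s <= sigma)%N by lia.
    have Ps := IH' s h1 h2.
    split; first by rewrite !size_map.
    split.
      move=> i j /andP[hij]; rewrite size_map size_iota => hj.
      rewrite (nth_map 0%N) ?size_iota; last by lia.
      rewrite (nth_map 0%N) ?size_iota; last by lia.
      rewrite !nth_iota; try lia.
      rewrite hblock //; last by lia.
      have -> : Posz (0 + i)%N + ((p s)%:Z - 1 - (Posz (0 + j)%N + m%:Z - (p s)%:Z))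
        = Posz (2 * p s - 1 - m - (j - i))%N by lia.
      by rewrite /= bin_small //; lia.
    move=> i; rewrite size_map size_iota => hi.
    rewrite (nth_map 0%N) ?size_iota; last by lia.
    rewrite (nth_map 0%N) ?size_iota; last by lia.
    rewrite !nth_iota; try lia.
    rewrite hblock //; last by lia.
    have -> : Posz (0 + i)%N + ((p s)%:Z - 1 - (Posz (0 + i)%N + m%:Z - (p s)%:Z))
      = Posz (2 * p s - 1 - m)%N by lia.
    by rewrite /= binn oner_neq0.
  move=> s s' y x hs hs' hne /mapP [a _ ->] /mapP [b _ ->].
  apply: hcross; first exact: hsr.
  by move=> c; apply: hOO.
have hfree : free (w t 0 *m N ^+ m :: flatten (map Xf L)).
  apply: (tri_free_cons hB htri hx) => j hj.
  have hj' : (j < size (flatten (map Yf L)))%N by rewrite -htri.1.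
  have /flatten_mapP [s hs /mapP [a _ ->]] := mem_nth 0 hj'.
  apply: hcross => // c.
  have [h1 h2 h3] := hL s hs.
  exact: (@orth _ _ h1 h2 (proj2 (andP ht)) (IH' s h1 h2)).
have hsub : (<<w t 0 *m N ^+ m :: flatten (map Xf L)>> <= Imv v m)%VS.
  apply/span_subvP => z; rewrite inE => /orP [/eqP -> | /flatten_mapP [s hs /mapP [i _ ->]]];
  exact: imN.
have := dimvS hsub; rewrite (eqP hfree) /= => hd.
have := leq_trans hd (dimIm v m).
have := @count_le t ht; rewrite -/m.
have -> : size (flatten (map Xf L)) = (\sum_(s <- L) (2 * p s - m))%N.
  rewrite size_flatten /shape -map_comp sumnE big_map.
  by apply: eq_bigr => s _; rewrite /= size_map size_iota.
move=> h1 h2; by have := leq_trans h2 h1; rewrite ltnn.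
Qed.

Lemma main_conc :
  (forall t i j, (1 <= t <= sigma)%N ->
     B (w t i) (w t j) =
       if (p t <= `|j - i|%N)%N
       then sgk k (j - i) * ('C(`|j - i|%N + p t - 1, `|j - i|%N - p t))%:R
       else 0) /\
  (kappa = 1%N -> forall i j, B (w sigma.+1 i) (w sigma.+1 j) = 0) /\
  (forall t r i j, (1 <= t <= sigma + kappa)%N -> (1 <= r <= sigma + kappa)%N ->
     t <> r -> B (w t i) (w r j) = 0).
Proof.
split.
  move=> t i j ht.
  have ht' : (1 <= t <= sigma + kappa)%N by lia.
  rewrite gram //; last exact: PP_all.
  have -> : j + ((p t)%:Z - 1 - i) = (j - i) + ((p t)%:Z - 1) by lia.
  exact: Gb_formula (hp1 t ht).
split.
  move=> hk1 i j.
  have hs : (1 <= sigma.+1 <= sigma + kappa)%N by lia.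
  have hP := @PP_all sigma.+1 hs.
  have hmm : mm sigma.+1 = 1%N by rewrite /mm ltnn.
  rewrite /PP hmm in hP.
  have hN := @wN0 sigma.+1 _ hs hP.
  have hg : forall i, w sigma.+1 (i + 1) = w sigma.+1 i.
    move=> i'; rewrite wS //; apply/eqP; rewrite -subr_eq0.
    by have := hN i'; rewrite expr1 /N mulmxBr mulmx1 => ->.
  have hc : forall i, w sigma.+1 i = w sigma.+1 0.
    apply: (@int_ind2 (fun i => w sigma.+1 i = w sigma.+1 0) 0) => // i'.
    by rewrite hg.
  by rewrite (hc i) (hc j) halt.
move=> t r i j ht hr htr.
case: (ltngtP t r) => h.
- apply: (@orth t r) => //; try lia. apply: PP_all; lia.
- rewrite skew; apply/eqP; rewrite oppr_eq0; apply/eqP.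
  apply: (@orth r t) => //; try lia. apply: PP_all; lia.
- by move: htr; rewrite h.
Qed.

End Main.

Unset Implicit Arguments.

Theorem proposition1p6 (k : closedFieldType) (nn : nat)
  (B : 'rV[k]_nn -> 'rV[k]_nn -> k) (Q : 'rV[k]_nn -> k)
  (kappa sigma : nat) (p : nat -> nat) (g : 'M[k]_nn)
  (w : nat -> int -> 'rV[k]_nn) :
  (3 <= nn)%N ->
  bilinear_form B -> quadratic_form Q ->
  ((forall x, Q x = 0) /\ (forall x, B x x = 0) /\
     (forall x, in_perp B x -> x = 0))
  \/
  ((exists x, Q x != 0) /\ (forall x y, B x y = Q (x + y) - Q x - Q y) /\
     (forall x y, in_perp B x -> in_perp B y -> Q x = Q y -> x = y)) ->
  (kappa <= 1)%N -> ~~ odd (nn - kappa) ->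
  (forall x, Q x = 0) \/ 2%N \in [pchar k] ->
  (forall t, (1 <= t)%N -> (t < sigma)%N -> (p t.+1 <= p t)%N) ->
  (forall t, (1 <= t <= sigma)%N -> (1 <= p t)%N) ->
  (\sum_(1 <= t < sigma.+1) p t)%N = ((nn - kappa)./2)%N ->
  isometry_of B Q g ->
  (exists m, (g - 1%:M) ^+ m = 0) ->
  jordan_blocks (g - 1%:M) ([seq (2 * p t)%N | t <- iota 1 sigma] ++ nseq kappa 1%N) ->
  adapted B Q g sigma kappa p w ->
  (* (a) *)
  (forall t i j, (1 <= t <= sigma)%N ->
     B (w t i) (w t j) =
       if (p t <= `|j - i|%N)%N
       then sgk k (j - i) * ('C(`|j - i|%N + p t - 1, `|j - i|%N - p t))%:R
       else 0) /\
  (* (b) *)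
  (kappa = 1%N -> forall i j, B (w sigma.+1 i) (w sigma.+1 j) = 0) /\
  (* (c) *)
  (forall t r i j, (1 <= t <= sigma + kappa)%N -> (1 <= r <= sigma + kappa)%N ->
     t <> r -> B (w t i) (w r j) = 0).
Proof.
move=> _ hB hQ hcase hk _ hchar hmono hp1 _ hiso _ hjord had.
have halt : forall x, B x x = 0.
  case: hcase => [[_ [h _]] //| [[x0 hx0] [hpol _]]] x.
  case: hchar => [hQ0 | h2]; first by move: hx0; rewrite hQ0 eqxx.
  rewrite hpol -mulr2n -scaler_nat hQ.1 (pcharf0 h2) expr0n mul0r sub0r -opprD.
  by rewrite -mulr2n -mulr_natr (pcharf0 h2) mulr0 oppr0.
have hgu : g \in unitmx := hiso.1.
exact: (@main_conc k nn B Q kappa sigma p g w hB halt hk hmono hp1 hgu hjord had).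
Qed.
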